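(* Let $f$ be an L-additive arithmetic function whose associated completely multiplicative function $h_f$ is nonzero-valued, let $\Lambda_f$ be its generalized von Mangoldt function, and let $g$ be a completely additive arithmetic function. Then for every positive integer $n$, $$(1\ast g\Lambda_f)(n)=\sum_{d\mid n}g(d)\Lambda_f(d)=\frac{1}{2}\sum_{p^{\alpha}\parallel n}\frac{\alpha(\alpha+1)f(p)g(p)}{h_f(p)}.$$
   Context: An arithmetic function $f:\mathbb{N}\to\mathbb{C}$ is L-additive if there is a completely multiplicative function $h_f$ such that $f(mn)=f(m)h_f(n)+f(n)h_f(m)$ for all positive integers $m,n$; such an $h_f$ is fixed. $\Lambda_f(n)=\frac{f(p)}{h_f(p)}$ if $n=p^k$ for some prime $p$ and integer $k\geq1$, and $0$ otherwise. A function $g$ is completely additive if $g(mn)=g(m)+g(n)$ for all positive integers $m,n$. $1$ is the constant function $1$, $\ast$ is Dirichlet convolution, $g\Lambda_f$ is the pointwise product, and $\sum_{p^\alpha\parallel n}$ runs over the primes $p$ dividing $n$ with $\alpha$ the exact exponent of $p$ in $n$. *)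

(* Defs.v *)
From mathcomp Require Import all_boot all_order all_algebra.
From mathcomp Require Import complex.
From mathcomp Require Import all_classical all_reals.
Set Implicit Arguments. Unset Strict Implicit. Unset Printing Implicit Defensive.
Import Order.TTheory GRing.Theory Num.Theory.
Local Open Scope ring_scope.

(* Arithmetic functions N -> C, with C = R[i] (complex numbers over a realType R).
   Values at 0 are irrelevant: all conditions quantify over positive integers. *)

Definition completely_multiplicative (C : nzRingType) (h : nat -> C) : Prop :=
  h 1%N = 1 /\ forall m n : nat, (0 < m)%N -> (0 < n)%N -> h (m * n)%N = h m * h n.

Definition completely_additive (C : nmodType) (g : nat -> C) : Prop :=
  forall m n : nat, (0 < m)%N -> (0 < n)%N -> g (m * n)%N = g m + g n.

Definition L_additive_wrt (C : comNzRingType) (f h : nat -> C) : Prop :=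
  completely_multiplicative h /\
  forall m n : nat, (0 < m)%N -> (0 < n)%N -> f (m * n)%N = f m * h n + f n * h m.

(* generalized von Mangoldt function: f(p)/h(p) if n = p^k (p prime, k >= 1), else 0 *)
Definition Lambda_f (C : fieldType) (f h : nat -> C) (n : nat) : C :=
  if [exists p : 'I_n.+1, exists k : 'I_n.+1,
        [&& prime p, (0 < k)%N & n == ((p : nat) ^ (k : nat))%N]]
  then f (pdiv n) / h (pdiv n) else 0.

Definition dconv (C : nzRingType) (a b : nat -> C) (n : nat) : C :=
  \sum_(d <- divisors n) a d * b (n %/ d)%N.

(* Main.v *)
Require Import Defs.
From mathcomp Require Import all_boot all_order all_algebra.
From mathcomp Require Import complex.
From mathcomp Require Import all_classical all_reals.
Import Order.TTheory GRing.Theory Num.Theory Num.Def.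
Local Open Scope ring_scope.
Local Open Scope complex_scope.
From mathcomp Require Import ring zify.
Lemma divn_inv {n d : nat} : (0 < n)%N -> (d %| n)%N -> (n %/ (n %/ d) = d)%N.
Proof.
move=> n0 dn; have d0 : (0 < d)%N by apply: dvdn_gt0 dn.
rewrite divnA ?dvdn_div // mulKn //.
Qed.

Lemma divisors_rev (V : zmodType) (b : nat -> V) n : (0 < n)%N ->
  \sum_(d <- divisors n) b (n %/ d)%N = \sum_(d <- divisors n) b d.
Proof.
move=> n0; rewrite -(big_map (fun d => n %/ d)%N xpredT b).
apply: perm_big; apply: uniq_perm.
- rewrite map_inj_in_uniq ?divisors_uniq // => x y.
  rewrite -!dvdn_divisors // => xn yn e.
  by rewrite -(divn_inv n0 xn) e divn_inv.
- exact: divisors_uniq.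
move=> x; apply/mapP/idP.
  by case=> y; rewrite -!dvdn_divisors // => yn ->; apply: dvdn_div.
rewrite -dvdn_divisors // => xn; exists (n %/ x)%N.
  by rewrite -dvdn_divisors // dvdn_div.
by rewrite divn_inv.
Qed.

Lemma Lam_pow (C : fieldType) (f h : nat -> C) p k : prime p ->
  Lambda_f f h (p ^ k.+1) = f p / h p.
Proof.
move=> pp; rewrite /Lambda_f pdiv_pfactor //.
have p1 : (1 < p)%N by apply: prime_gt1.
have kl : (k.+1 < (p ^ k.+1).+1)%N by apply: ltnW; rewrite ltnS ltn_expl.
have pl : (p < (p ^ k.+1).+1)%N.
  by rewrite ltnS -{1}(expn1 p) leq_exp2l // prime_gt1.
case: ifP => // /negbT/negP []; apply/existsP; exists (Ordinal pl).
apply/existsP; exists (Ordinal kl) => /=; by rewrite pp eqxx.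
Qed.

Lemma Lam_nz (C : fieldType) (f h : nat -> C) d : Lambda_f f h d != 0 ->
  exists p k, [/\ prime p, (0 < k)%N & d = p ^ k]%N.
Proof.
rewrite /Lambda_f; case: ifP; last by rewrite eqxx.
case/existsP=> p /existsP [k /and3P [pp k0 /eqP e]] _.
by exists p, k.
Qed.

Lemma g_pow (V : zmodType) (g : nat -> V) p k : completely_additive g -> (0 < p)%N ->
  g (p ^ k)%N = g p *+ k.
Proof.
move=> hg p0; elim: k => [|k IH].
  have := hg 1%N 1%N isT isT; rewrite muln1.
  by move=> /(congr1 (fun x => x - g 1%N)) /=; rewrite subrr addrK => <-.
by rewrite expnS hg ?expn_gt0 ?p0 // IH mulrS.
Qed.
Lemma sum_pp (V : zmodType) (F : nat -> V) n : (0 < n)%N ->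
  (forall d, F d != 0 -> exists p k, [/\ prime p, (0 < k)%N & d = p ^ k]%N) ->
  \sum_(d <- divisors n) F d =
  \sum_(p <- primes n) \sum_(k < logn p n) F (p ^ k.+1)%N.
Proof.
move=> n0 HF.
transitivity (\sum_(d <- divisors n) \sum_(p <- primes n) \sum_(k < logn p n)
   (if d == (p ^ k.+1)%N then F d else 0)).
  apply: eq_big_seq => d; rewrite -dvdn_divisors // => dn.
  case: (eqVneq (F d) 0) => [Fd0|nz].
    rewrite Fd0; symmetry; apply: big1 => p _; apply: big1 => k _.
    by case: ifP.
  have [q [[|i] [qp i0 ed]]] := HF d nz; subst d; first by [].
  have qin : q \in primes n.
    rewrite mem_primes qp n0 /=; apply: dvdn_trans dn.
    by rewrite dvdn_exp.
  have il : (i < logn q n)%N by rewrite -pfactor_dvdn.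
  have q1 : (1 < q)%N by apply: prime_gt1.
  rewrite (bigD1_seq q) ?primes_uniq //= [X in _ + X]big_seq_cond [X in _ + X]big1 ?addr0.
    rewrite (bigD1 (Ordinal il)) //= eqxx big1 ?addr0 // => k kne.
    case: ifP => // /eqP /eqP; rewrite eqn_exp2l // eqSS => ek.
    by rewrite -(inj_eq val_inj) /= eq_sym ek in kne.
  move=> p /andP [pin pq]; apply: big1 => k _; case: ifP => // /eqP e.
  have pp : prime p by move: pin; rewrite mem_primes => /andP [].
  have : (p %| q ^ i.+1)%N by rewrite e dvdn_exp.
  by rewrite Euclid_dvdX // dvdn_prime2 // (negbTE pq).
rewrite exchange_big; apply: eq_big_seq => p pin /=.
rewrite exchange_big; apply: eq_bigr => k _ /=.
have pp : prime p by move: pin; rewrite mem_primes => /andP [].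
have kin : (p ^ k.+1)%N \in divisors n.
  by rewrite -dvdn_divisors // pfactor_dvdn.
rewrite (bigD1_seq (p ^ k.+1)%N) ?divisors_uniq //= eqxx big1 ?addr0 //.
by move=> d /negbTE ->.
Qed.
Lemma tri_nat l : (2 * \sum_(k < l) k.+1 = l * l.+1)%N.
Proof.
elim: l => [|l IH]; first by rewrite big_ord0.
rewrite big_ord_recr /= mulnDr IH; lia.
Qed.

Theorem theorem2p3 (R : realType) (f h g : nat -> R[i])
  (hLadd : L_additive_wrt f h)
  (hnz : forall n : nat, (0 < n)%N -> h n != 0)
  (hg : completely_additive g) (n : nat) (hn : (0 < n)%N) :
  dconv (fun _ => 1) (fun d => g d * Lambda_f f h d) n
    = \sum_(d <- divisors n) g d * Lambda_f f h d
  /\ \sum_(d <- divisors n) g d * Lambda_f f h d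
    = 2^-1 * \sum_(p <- primes n)
        ((logn p n * (logn p n).+1)%:R * f p * g p / h p).
Proof.
have two : (2%:R : R[i]) != 0 by rewrite pnatr_eq0.
split.
  rewrite /dconv; under eq_bigr do rewrite mul1r.
  have H := @divisors_rev (R[i]) (fun d => g d * Lambda_f f h d) n. exact: H hn.
rewrite (sum_pp _ (fun d => g d * Lambda_f f h d) n hn); last first.
  move=> d nz; apply: (Lam_nz _ f h); apply: contraNneq nz => ->; by rewrite mulr0.
rewrite big_distrr; apply: eq_big_seq => p pin /=.
have pp : prime p by move: pin; rewrite mem_primes => /andP [].
have p0 : (0 < p)%N by apply: prime_gt0.
under eq_bigr do rewrite Lam_pow // g_pow // -mulr_natl -mulrA.
rewrite -big_distrl /=.
have -> : \sum_(i < logn p n) (i.+1)%:R = ((logn p n * (logn p n).+1)%:R / 2 : R[i]).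
  rewrite -tri_nat natrM -natr_sum [(2%:R * _)]mulrC mulfK //.
have := hnz p p0; set l := logn p n => hp.
by field.
Qed.
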